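(* Let $k\ge 2$, let $G$ be a finite simple graph with a closed neighborhood balanced $k$-coloring $c$, and let $z\in V(G)$ with $c(z)=k$. Let $G'$ be obtained from $G$ by a $(3k-2)$-vertex addition at $z$, with the coloring $c'$ extending $c$ described below. Then $c'$ is a closed neighborhood balanced $k$-coloring of $G'$, and compared with $c$ on $G$, $c'$ has exactly one additional vertex of color $k$ and exactly three additional vertices of each color $1,\dots,k-1$.
   Context: For a vertex $v$, $N[v]=\{v\}\cup\{u : uv\in E(G)\}$. A closed neighborhood balanced $k$-coloring of $G$ is a map $c: V(G)\to\{1,\dots,k\}$ such that for every vertex $v$ the numbers $|\{u\in N[v] : c(u)=i\}|$, $i=1,\dots,k$, are all equal. A $(3k-2)$-vertex addition at $z$ (where $c(z)=k$): add new vertices $u_1,\dots,u_k$, each adjacent to $z$; for each $1\le i\le k-1$, $u_i$ is adjacent to $u_{i+1},\dots,u_{k-1}$; add new vertices $v_1,\dots,v_{k-1}$ and $v_1',\dots,v_{k-1}'$, all adjacent to $u_k$; for each $1\le i\le k-2$, $v_i$ is adjacent to $v_{i+1},\dots,v_{k-1}$ and $v_i'$ is adjacent to $v_{i+1}',\dots,v_{k-1}'$; there are no other new edges. The coloring $c'$ agrees with $c$ on $V(G)$, gives $u_i$ color $i$ ($1\le i\le k$), and gives both $v_i$ and $v_i'$ color $i$ ($1\le i\le k-1$). *)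

(* Defs.v *)
From mathcomp Require Import all_boot.
Set Implicit Arguments. Unset Strict Implicit. Unset Printing Implicit Defensive.

Definition cnbhd (V : finType) (e : rel V) (v : V) : {set V} :=
  [set u | (u == v) || e v u].

Definition cnb_coloring (V : finType) (e : rel V) (k : nat) (c : V -> nat) : Prop :=
  (forall v, 1 <= c v <= k) /\
  (forall v i j, 1 <= i <= k -> 1 <= j <= k ->
     #|[set u in cnbhd e v | c u == i]| = #|[set u in cnbhd e v | c u == j]|).

(* Vertex set of G' : old vertices (inl a), the u's (inr (inl t), t : 'I_k,
   standing for u_(t+1)), the v's (inr (inr (inl t)), t : 'I_(k-1), standing
   for v_(t+1)) and the v''s (inr (inr (inr t)), standing for v'_(t+1)). *)
Definition addv_type (V : finType) (k : nat) : finType :=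
  (V + ('I_k + ('I_k.-1 + 'I_k.-1)))%type.

(* The listed (one-directional) adjacencies of the (3k-2)-vertex addition. *)
Definition addv_base (V : finType) (e : rel V) (k : nat) (z : V)
  (x y : addv_type V k) : bool :=
  match x, y with
  | inl a, inl b => e a b
  | inr (inl _), inl a => a == z                            (* u_i ~ z, 1<=i<=k *)
  | inr (inl s), inr (inl t) =>                             (* u_i ~ u_j, i<j<=k-1 *)
      (val s < val t) && (val t < k.-1)
  | inr (inr (inl _)), inr (inl t) => val t == k.-1         (* v_i ~ u_k *)
  | inr (inr (inr _)), inr (inl t) => val t == k.-1         (* v'_i ~ u_k *)
  | inr (inr (inl s)), inr (inr (inl t)) => val s < val t
  | inr (inr (inr s)), inr (inr (inr t)) => val s < val t
  | _, _ => false
  end.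

Definition addv_edge (V : finType) (e : rel V) (k : nat) (z : V) :
  rel (addv_type V k) :=
  fun x y => addv_base e z x y || addv_base e z y x.

Definition addv_color (V : finType) (k : nat) (c : V -> nat)
  (x : addv_type V k) : nat :=
  match x with
  | inl a => c a
  | inr (inl t) => (val t).+1
  | inr (inr (inl t)) => (val t).+1
  | inr (inr (inr t)) => (val t).+1
  end.

(* Main.v *)
Require Import Defs.
From mathcomp Require Import all_boot zify.
Lemma card_sumP (A B : finType) (P : pred (A + B)%type) :
  #|[set x | P x]| = #|[set a | P (inl a)]| + #|[set b | P (inr b)]|.
Proof. by rewrite -!sum1dep_card big_sumType. Qed.

Lemma card_eq1 (T : finType) (P : pred T) (z : T) (b : bool) :
  (forall x, P x = (x == z) && b) -> #|[set x | P x]| = b.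
Proof.
move=> H. case: b H => H.
  by rewrite (_ : [set x | P x] = [set z]) ?cards1 //; apply/setP => x; rewrite !inE H andbT.
by apply/eqP; rewrite cards_eq0; apply/eqP/setP => x; rewrite !inE H andbF.
Qed.

Lemma card_ordm n (P : pred 'I_n) (q : nat -> bool) m :
  (forall t : 'I_n, P t = q (val t) && (val t == m)) -> #|[set t | P t]| = q m && (m < n).
Proof.
move=> H. case: (ltnP m n) => Hm.
  rewrite (@card_eq1 _ _ (Ordinal Hm) (q m)) ?andbT // => t.
  rewrite H -val_eqE /= andbC. by case: eqP => // ->.
rewrite andbF; apply/eqP; rewrite cards_eq0; apply/eqP/setP => t; rewrite !inE H.
case: eqP => [Ht|]; last by rewrite andbF.
exfalso; move: (ltn_ord t); rewrite Ht; lia.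
Qed.

Lemma card_false (T : finType) (P : pred T) : (forall x, P x = false) -> #|[set x | P x]| = 0.
Proof. by move=> H; apply/eqP; rewrite cards_eq0; apply/eqP/setP => x; rewrite !inE H. Qed.
Lemma card_setF (T : finType) : #|[set _ : T | false]| = 0.
Proof. by apply: card_false. Qed.

Lemma nbc (k : nat) (V : finType) (e : rel V) (c : V -> nat) (z : V) x m :
  2 <= k -> symmetric e -> c z = k -> m < k ->
  #|[set u in cnbhd (@addv_edge V e k z) x | @addv_color V k c u == m.+1]| =
  match x with
  | inl a => #|[set u in cnbhd e a | c u == m.+1]| + (a == z)
  | inr (inl s) => if val s == k.-1 then 2 else 1
  | _ => 1 end.
Proof.
move=> hk esym cz hm.
rewrite (_ : [set u in cnbhd _ x | _] = [set u | ((u == x) || addv_edge e z x u) && (addv_color c u == m.+1)]); last first.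
  by apply/setP => u; rewrite !inE.
rewrite card_sumP card_sumP card_sumP.
case: x => [a|[s|[s|s]]] /=.
all: rewrite /addv_edge /= ?card_setF.
- rewrite (@card_ordm _ _ (fun _ => a == z) m) ?hm ?andbT ?addn0; last by move=> t; rewrite eqSS.
  congr (_ + _); apply: eq_card => b; rewrite !inE (esym b a) orbb.
  by rewrite (_ : (inl b == inl a :> addv_type V k) = (b == a)).
- rewrite (@card_eq1 _ _ z (c z == m.+1)); last by move=> b; rewrite orbF; case: eqP => // ->.
  rewrite (@card_ordm _ _ (fun j => [|| j == val s, (val s < j) && (j < k.-1) | (j < val s) && (val s < k.-1)]) m); last first.
    move=> t; rewrite eqSS.
    by rewrite (_ : (inr (inl t) == inr (inl s) :> addv_type V k) = (val t == val s)).
  rewrite (@card_ordm k.-1 _ (fun _ => val s == k.-1) m); last by move=> t; rewrite eqSS.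
  rewrite cz hm; case: s => sv hs /=; have [->|ne] := eqVneq sv k.-1; lia.
- rewrite (@card_ordm _ _ (fun j => j == k.-1) m); last by move=> t; rewrite eqSS orbF.
  rewrite (@card_ordm _ _ (fun _ => true) m); last first.
    move=> t; rewrite eqSS.
    rewrite (_ : (inr (inr (inl t)) == inr (inr (inl s)) :> addv_type V k) = (val t == val s)) //.
    by case: ltngtP.
  rewrite hm; lia.
- rewrite (@card_ordm _ _ (fun j => j == k.-1) m); last by move=> t; rewrite eqSS orbF.
  rewrite (@card_ordm _ _ (fun _ => true) m); last first.
    move=> t; rewrite eqSS.
    rewrite (_ : (inr (inr (inr t)) == inr (inr (inr s)) :> addv_type V k) = (val t == val s)) //.
    by case: ltngtP.
  rewrite hm; lia.
Qed.

Lemma colc (k : nat) (V : finType) (c : V -> nat) m : m < k ->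
  #|[set x : addv_type V k | @addv_color V k c x == m.+1]| =
  #|[set a : V | c a == m.+1]| + ((m < k) + ((m < k.-1) + (m < k.-1))).
Proof.
move=> hm; rewrite card_sumP card_sumP card_sumP /=.
rewrite (@card_ordm _ _ (fun _ => true) m); last by move=> t; rewrite eqSS.
rewrite (@card_ordm k.-1 _ (fun _ => true) m); last by move=> t; rewrite eqSS.
by [].
Qed.

Theorem proposition2p13 (k : nat) (V : finType) (e : rel V) (c : V -> nat) (z : V) :
  2 <= k ->
  symmetric e -> irreflexive e ->
  cnb_coloring e k c ->
  c z = k ->
  cnb_coloring (@addv_edge V e k z) k (@addv_color V k c) /\
  #|[set x : addv_type V k | @addv_color V k c x == k]| = #|[set a : V | c a == k]| + 1 /\
  (forall i, 1 <= i <= k.-1 ->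
     #|[set x : addv_type V k | @addv_color V k c x == i]| = #|[set a : V | c a == i]| + 3).
Proof.
move=> hk esym eirr [crng cbal] cz.
split; [split|split].
- case=> [a|[t|[t|t]]] /=; first exact: crng.
  + by have := ltn_ord t; lia.
  + by have := ltn_ord t; lia.
  + by have := ltn_ord t; lia.
- move=> x [|i] [|j] // hi hj.
  have hi' : i < k by case/andP: hi.
  have hj' : j < k by case/andP: hj.
  rewrite !(@nbc k V e c z x) //.
  by case: x => // a; rewrite (cbal a i.+1 j.+1).
- have H : k.-1 < k by lia.
  move: (@colc k V c k.-1 H); rewrite ltnn H prednK; last by lia.
  by move=> ->.
- move=> [|i] // hi0; have hi : i < k.-1 by case/andP: hi0.
  rewrite colc; last by lia.
  have -> : i < k.-1 by lia.
  have -> : i < k by lia.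
  by [].
Qed.
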